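(* Let $\mathcal{T}$ be a set of finite simplicial complexes, and let $\Lambda$ be a real-valued function on $\mathcal{T}$. Suppose there are real numbers $b_{-1}, b_0, b_1, \ldots$ such that $\Lambda(K) = \sum_{i=-1}^{\dim K} b_i f_i(K)$ for all $K \in \mathcal{T}$. \begin{enumerate} \item If all the simplicial complexes in $\mathcal{T}$ have the same non-zero Euler characteristic, then $\Lambda$ is combinatorially locally determined. \item If $b_{-1} = 0$, then $\Lambda$ is combinatorially locally determined. \item If $b_{-1} \neq 0$, and if $\mathcal{T}$ contains all flag $d$-spheres for some odd integer $d \geq 3$, then $\Lambda$ is not combinatorially locally determined. \end{enumerate}
   Context: All simplicial complexes are finite. For a simplicial complex $K$, $f_i(K)$ denotes the number of $i$-simplices of $K$ for $i \in \{0,1,\ldots,\dim K\}$, with the convention $f_{-1}(K) = 1$ and $f_i(K) = 0$ for all other integers $i$. $\operatorname{Vert}(K)$ is the set of vertices of $K$, and $\operatorname{lk}(v,K)$ is the link of the vertex $v$ in $K$. For a set $\mathcal{T}$ of simplicial complexes let $\operatorname{Links}(\mathcal{T}) = \{\operatorname{lk}(v,K) \mid K \in \mathcal{T},\ v \in \operatorname{Vert}(K)\}$. A real-valued function $\Lambda$ on $\mathcal{T}$ is combinatorially locally determined if there is a real-valued function $h$ on $\operatorname{Links}(\mathcal{T})$ that is invariant under combinatorial equivalence (isomorphic complexes get the same value) such that $\Lambda(K) = \sum_{v \in \operatorname{Vert}(K)} h(\operatorname{lk}(v,K))$ for every $K \in \mathcal{T}$. A simplicial complex $K$ is a flag complex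 if for every subset $T \subseteq \operatorname{Vert}(K)$ whose vertices are pairwise joined by edges, $T$ is the vertex set of a face of $K$. A flag $d$-sphere is a flag simplicial complex whose underlying space is homeomorphic to the $d$-sphere. *)

(* Defs.v *)
From HB Require Import structures.
From mathcomp Require Import all_boot all_order all_algebra.
From mathcomp Require all_classical all_reals all_analysis.

Set Implicit Arguments.
Unset Strict Implicit.
Unset Printing Implicit Defensive.

Import Order.TTheory GRing.Theory Num.Theory.

Local Open Scope ring_scope.

(* A finite (abstract) simplicial complex: a downward closed family of finite
   subsets of a finite vertex universe 'I_n, containing the empty face (so
   that f_{-1} = 1). *)
Record complex := Complex {
  cn : nat;
  faces : {set {set 'I_cn}};
  faces_set0 : set0 \in faces;
  faces_closed : [forall s in faces, forall t : {set 'I_cn},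
                    (t \subset s) ==> (t \in faces)] }.

Definition Vert (K : complex) : {set 'I_(cn K)} :=
  [set v | [set v] \in faces K].

(* f_i(K) for an integer i: number of faces of cardinality i+1.
   Gives f_{-1} = 1 and f_i = 0 for i < -1 or i > dim K. *)
Definition fvec (i : int) (K : complex) : nat :=
  #|[set s in faces K | (#|s|%:Z == i + 1)%R]|.

Definition dimS (K : complex) : nat := \max_(s in faces K) #|s|.
Definition dim (K : complex) : int := (dimS K)%:Z - 1.

Definition euler (K : complex) : int :=
  \sum_(k < dimS K) (-1) ^+ k * (fvec k%:Z K)%:Z.

Definition fsum (R : numDomainType) (b : int -> R) (K : complex) : R :=
  \sum_(k < (dimS K).+1) b (k%:Z - 1) * (fvec (k%:Z - 1) K)%:R.

(* Link of a vertex v (for v a vertex the extra empty face is already there). *)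
Definition link_faces (K : complex) (v : 'I_(cn K)) : {set {set 'I_(cn K)}} :=
  [set s in faces K | (v \notin s) && ((v |: s) \in faces K)] :|: [set set0].

Arguments link_faces : clear implicits.

Lemma link_set0 (K : complex) v : set0 \in link_faces K v.
Proof. by rewrite /link_faces in_setU in_set1 eqxx orbT. Qed.

Arguments link_set0 : clear implicits.

Lemma link_closed (K : complex) v :
  [forall s in link_faces K v, forall t : {set 'I_(cn K)},
     (t \subset s) ==> (t \in link_faces K v)].
Proof.
apply/forall_inP => s; rewrite /link_faces in_setU in_set1 => /orP [|/eqP ->].
- rewrite inE => /andP [sK /andP [vs vsK]]; apply/forallP => t; apply/implyP => ts.
  have cl := faces_closed K.
  rewrite in_setU; apply/orP; left; rewrite inE.
  have tK : t \in faces K.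
    by move/forall_inP: cl => /(_ _ sK) /forallP /(_ t) /implyP; apply.
  rewrite tK /=; apply/andP; split.
    by apply: contra vs; apply: (subsetP ts).
  move/forall_inP: cl => /(_ _ vsK) /forallP /(_ (v |: t)) /implyP; apply.
  by apply: setUS.
- apply/forallP => t; apply/implyP; rewrite subset0 => /eqP ->.
  exact: link_set0.
Qed.

Arguments link_closed : clear implicits.

Definition link (K : complex) (v : 'I_(cn K)) : complex :=
  @Complex (cn K) (link_faces K v) (link_set0 K v) (link_closed K v).

Arguments link_faces : clear implicits.
Arguments link : clear implicits.

Definition comb_equiv (K L : complex) : Prop :=
  exists (f : 'I_(cn K) -> 'I_(cn L)) (g : 'I_(cn L) -> 'I_(cn K)),
    [/\ (forall s, s \in faces K -> f @: s \in faces L),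
        (forall t, t \in faces L -> g @: t \in faces K),
        (forall v, v \in Vert K -> g (f v) = v) &
        (forall w, w \in Vert L -> f (g w) = w)].

Definition Links (T : complex -> Prop) : complex -> Prop :=
  fun L => exists (K : complex) (v : 'I_(cn K)),
    [/\ T K, v \in Vert K & L = link K v].

Definition comb_locally_determined (R : numDomainType)
    (T : complex -> Prop) (Lam : complex -> R) : Prop :=
  exists h : complex -> R,
    (forall L1 L2, Links T L1 -> Links T L2 -> comb_equiv L1 L2 -> h L1 = h L2) /\
    (forall K, T K -> Lam K = \sum_(v in Vert K) h (link K v)).

Definition flag (K : complex) : Prop :=
  forall S : {set 'I_(cn K)}, S \subset Vert K ->
    (forall u w, u \in S -> w \in S -> u != w -> [set u; w] \in faces K) ->
    S \in faces K.

From mathcomp Require Import all_classical all_reals all_analysis.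
Import numFieldNormedType.Exports.
Local Open Scope classical_set_scope.
Local Open Scope ring_scope.

Definition realization (R : realType) (K : complex) : set 'rV[R]_(cn K) :=
  [set x | (forall i, 0 <= x ord0 i) /\ \sum_i x ord0 i = 1 /\
           finset (fun i => x ord0 i != 0) \in faces K].

Definition sphere (R : realType) (d : nat) : set 'rV[R]_d.+1 :=
  [set y | \sum_i y ord0 i ^+ 2 = 1].

Arguments realization : clear implicits.
Arguments sphere : clear implicits.

Definition homeomorphic (R : realType) (m n : nat)
    (A : set 'rV[R]_m) (B : set 'rV[R]_n) : Prop :=
  exists (f : 'rV[R]_m -> 'rV[R]_n) (g : 'rV[R]_n -> 'rV[R]_m),
    [/\ (forall x, A x -> B (f x)), (forall y, B y -> A (g y)),
        (forall x, A x -> g (f x) = x) & (forall y, B y -> f (g y) = y)] /\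
    ({within A, continuous f} /\ {within B, continuous g}).

Definition flag_sphere (R : realType) (d : nat) (K : complex) : Prop :=
  flag K /\ homeomorphic (realization R K) (sphere R d).

(* Main.v *)
Require Import Defs.
From HB Require Import structures.
From mathcomp Require Import all_boot all_order all_algebra.
From mathcomp Require Import all_classical all_reals all_analysis.
Import Order.TTheory GRing.Theory Num.Theory.
From mathcomp Require Import finset fintype.
From mathcomp Require Import ring lra.
Local Open Scope ring_scope.
Set Implicit Arguments.
Unset Strict Implicit.
Unset Printing Implicit Defensive.

Definition fn (k : nat) (K : complex) : nat :=
  #|[set s in faces K | #|s| == k]|.

Lemma fvec_fn (k : nat) K : fvec (k%:Z - 1) K = fn k K.
Proof.
rewrite /fvec /fn; apply: eq_card => s; rewrite !inE.
by rewrite subrK eqz_nat.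
Qed.

Lemma face_closed (K : complex) (s t : {set 'I_(cn K)}) : s \in faces K -> t \subset s -> t \in faces K.
Proof.
move=> sK ts; have := faces_closed K.
by move/forall_inP => /(_ _ sK) /forallP /(_ t) /implyP; apply.
Qed.

Lemma face_vert (K : complex) (s : {set 'I_(cn K)}) u : s \in faces K -> u \in s -> u \in Vert K.
Proof.
move=> sK us; rewrite inE; apply: (face_closed sK); by rewrite finset.sub1set.
Qed.

Lemma fn_big (K : complex) k : (cn K < k)%N -> fn k K = 0%N.
Proof.
move=> lt; apply/eqP; rewrite cards_eq0; apply/eqP/setP => s; rewrite !inE.
apply/negbTE; apply/negP => /andP [_ /eqP sk].
have := max_card s; rewrite card_ord sk; by rewrite leqNgt lt.
Qed.

Lemma fn0 (K : complex) : fn 0 K = 1%N.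
Proof.
rewrite /fn (_ : [set s in faces K | #|s| == 0%N] = [set finset.set0]) ?cards1 //.
apply/finset.setP => s; rewrite !inE cards_eq0; case: eqP => [->|]; rewrite ?faces_set0 //.
by rewrite andbF.
Qed.

Lemma link_count (K : complex) k :
  (\sum_(v in Vert K) fn k (link K v))%N = (k.+1 * fn k.+1 K)%N.
Proof.
have E : forall v, v \in Vert K -> fn k (link K v) =
    #|[set t in faces K | (#|t| == k.+1) && (v \in t)]|.
  move=> v vV; rewrite /fn.
  rewrite -(@card_in_imset _ _ (fun s => v |: s)).
    apply: eq_card => t; rewrite !inE; apply/imsetP/idP.
      case=> s; rewrite !inE /link_faces /= ?inE => /andP [/orP [|]].
        case/andP=> sK /andP [vs vsK] sk ->.
        by rewrite vsK setU11 cardsU1 vs (eqP sk) eqxx.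
      move/eqP=> -> /eqP <- ->; rewrite setU0 cards1 cards0 set11 eqxx andbT.
      by rewrite andbT; move: vV; rewrite inE.
    case/andP=> tK /andP [tk vt]; exists (t :\ v); last by rewrite setD1K.
    rewrite !inE /link_faces /= ?inE eqxx /= setD1K // tK andbT.
    rewrite (face_closed tK) ?subD1set //=.
    by have := cardsD1 v t; rewrite vt (eqP tk) add1n => -[<-].
  move=> s1 s2; rewrite !inE /link_faces /= ?inE => /andP [h1 _] /andP [h2 _] e.
  have n1 : v \notin s1.
    case/orP: h1 => [/andP [_ /andP [//]]|/eqP ->]; by rewrite inE.
  have n2 : v \notin s2.
    case/orP: h2 => [/andP [_ /andP [//]]|/eqP ->]; by rewrite inE.
  by rewrite -(setU1K n1) -(setU1K n2) e.
rewrite (eq_bigr _ E) /= /fn.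
rewrite (eq_bigr (fun v => \sum_(t in [set t in faces K | #|t| == k.+1]) nat_of_bool (v \in t))%N);
  last first.
  move=> v _; rewrite -sum1_card [LHS]big_mkcond [RHS]big_mkcond /=.
  by apply: eq_bigr => t _; rewrite !inE; case: (t \in faces K); case: (_ == _); case: (v \in t).
rewrite exchange_big /= -sum1_card big_distrr /= muln1 /=.
apply: eq_bigr => t; rewrite inE => /andP [tK /eqP tk].
rewrite -tk -sum1_card big_mkcond /= [RHS]big_mkcond /=.
apply: eq_bigr => v _; case vt: (v \in t); last by case: (v \in Vert K).
by rewrite (face_vert tK vt).
Qed.

Lemma sum_widen (R : nmodType) (F : nat -> R) m n :
  (forall k, (m <= k)%N -> F k = 0) -> (m <= n)%N ->
  \sum_(k < m) F k = \sum_(k < n) F k.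
Proof.
move=> F0 mn; rewrite (big_ord_widen n F mn) big_mkcond /=.
apply: eq_bigr => i _; case: ifP => // /negbT; rewrite -leqNgt => /F0 ->//.
Qed.

Lemma fn_gt_dimS (K : complex) k : (dimS K < k)%N -> fn k K = 0%N.
Proof.
move=> lt; apply/eqP; rewrite cards_eq0; apply/eqP/setP => s; rewrite !inE.
apply/negbTE; apply/negP => /andP [sK /eqP sk].
have : (#|s| <= dimS K)%N by rewrite /dimS; apply: (leq_bigmax_cond _ sK).
by rewrite sk leqNgt lt.
Qed.

Lemma dimS_cn (K : complex) : (dimS K <= cn K)%N.
Proof.
rewrite /dimS; apply/bigmax_leqP => s _.
by have := max_card s; rewrite card_ord.
Qed.

Lemma intS1 (n : nat) : (n.+1)%:Z - 1 = n%:Z.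
Proof. by rewrite -addn1 PoszD addrK. Qed.

Section Local.
Variable R : numFieldType.

Definition h0 (b : int -> R) (L : complex) : R :=
  \sum_(k < (cn L).+1) b k%:Z * (fn k L)%:R / (k.+1)%:R.

Definition e0 (L : complex) : R :=
  \sum_(k < (cn L).+1) (-1) ^+ k * (fn k L)%:R / (k.+1)%:R.

Lemma local_gen (F : nat -> R) (K : complex) :
  \sum_(v in Vert K) \sum_(k < (cn K).+1) F k * (fn k (link K v))%:R / (k.+1)%:R
  = \sum_(k < (cn K).+1) F k * (fn k.+1 K)%:R.
Proof.
rewrite exchange_big /=; apply: eq_bigr => k _.
rewrite -big_distrl -big_distrr /= -natr_sum link_count natrM.
rewrite mulrA -mulrA [X in _ * X]mulrC mulrA mulfK // pnatr_eq0.
Qed.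

Lemma fsum_split (b : int -> R) (K : complex) :
  fsum b K = b (-1) + \sum_(k < (cn K).+1) b k%:Z * (fn k.+1 K)%:R.
Proof.
rewrite /fsum big_ord_recl /= (fvec_fn 0) fn0 mulr1.
congr (_ + _).
transitivity (\sum_(k < dimS K) b k%:Z * (fn k.+1 K)%:R).
  by apply: eq_bigr => i _; rewrite /bump /= add1n -fvec_fn intS1.
apply: (@sum_widen _ (fun k => b k%:Z * (fn k.+1 K)%:R) (dimS K) (cn K).+1).
- by move=> k le; rewrite fn_gt_dimS ?mulr0.
- by apply: leqW; apply: dimS_cn.
Qed.

Lemma euler_split (K : complex) :
  (euler K)%:~R = \sum_(k < (cn K).+1) (-1) ^+ k * (fn k.+1 K)%:R :> R.
Proof.
rewrite /euler rmorph_sum /=.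
transitivity (\sum_(k < dimS K) (-1) ^+ k * (fn k.+1 K)%:R : R).
  apply: eq_bigr => i _; rewrite rmorphM /= rmorphXn /= rmorphN1.
  by rewrite -(intS1 i) fvec_fn.
apply: (@sum_widen _ (fun k => (-1) ^+ k * (fn k.+1 K)%:R) (dimS K) (cn K).+1).
- by move=> k le; rewrite fn_gt_dimS ?mulr0.
- by apply: leqW; apply: dimS_cn.
Qed.

End Local.

Lemma gf_set (L1 L2 : complex) (f : 'I_(cn L1) -> 'I_(cn L2)) (g : 'I_(cn L2) -> 'I_(cn L1))
  (s : {set 'I_(cn L1)}) : s \in faces L1 ->
  (forall v, v \in Vert L1 -> g (f v) = v) -> g @: (f @: s) = s.
Proof.
move=> sK gf; rewrite -imset_comp; apply/setP => x; apply/imsetP/idP.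
  by case=> y ys ->; rewrite /= gf // (face_vert sK ys).
by move=> xs; exists x => //=; rewrite gf // (face_vert sK xs).
Qed.

Lemma fn_le (L1 L2 : complex) (f : 'I_(cn L1) -> 'I_(cn L2)) (g : 'I_(cn L2) -> 'I_(cn L1)) k :
  (forall s, s \in faces L1 -> f @: s \in faces L2) ->
  (forall v, v \in Vert L1 -> g (f v) = v) -> (fn k L1 <= fn k L2)%N.
Proof.
move=> fF gf; rewrite /fn.
rewrite -(@card_in_imset _ _ (fun s : {set 'I_(cn L1)} => f @: s)); last first.
  move=> s1 s2; rewrite !inE => /andP [s1K _] /andP [s2K _] e.
  by rewrite -(gf_set s1K gf) -(gf_set s2K gf) e.
apply: subset_leq_card; apply/subsetP => t /imsetP [s sA ->]; move: sA; rewrite !inE => /andP [sK sk].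
rewrite fF //=; rewrite card_in_imset // => x y xs ys e.
by rewrite -(gf _ (face_vert sK xs)) -(gf _ (face_vert sK ys)) e.
Qed.

Lemma fn_equiv (L1 L2 : complex) k : comb_equiv L1 L2 -> fn k L1 = fn k L2.
Proof.
case=> f [g [fF gF gf fg]]; apply/eqP; rewrite eqn_leq.
by rewrite (fn_le k fF gf) (fn_le k gF fg).
Qed.

Lemma fn_cn (L : complex) k : (cn L < k)%N -> fn k L = 0%N.
Proof. exact: fn_big. Qed.

Section Inv.
Variable R : numFieldType.

Lemma h0_N (b : int -> R) (L : complex) N : ((cn L).+1 <= N)%N ->
  h0 b L = \sum_(k < N) b k%:Z * (fn k L)%:R / (k.+1)%:R.
Proof.
move=> le; apply: (@sum_widen _ (fun k => b k%:Z * (fn k L)%:R / (k.+1)%:R)) => //.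
by move=> k lk; rewrite fn_cn // mulr0 mul0r.
Qed.

Lemma e0_N (L : complex) N : ((cn L).+1 <= N)%N ->
  e0 R L = \sum_(k < N) (-1) ^+ k * (fn k L)%:R / (k.+1)%:R.
Proof.
move=> le; apply: (@sum_widen _ (fun k => (-1) ^+ k * (fn k L)%:R / (k.+1)%:R : R)) => //.
by move=> k lk; rewrite fn_cn // mulr0 mul0r.
Qed.

Lemma h0_inv (b : int -> R) L1 L2 : comb_equiv L1 L2 -> h0 b L1 = h0 b L2.
Proof.
move=> e; rewrite (@h0_N b L1 (cn L1 + cn L2).+1) ?ltnS ?leq_addr //.
rewrite (@h0_N b L2 (cn L1 + cn L2).+1) ?ltnS ?leq_addl //.
by apply: eq_bigr => k _; rewrite (fn_equiv k e).
Qed.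

Lemma e0_inv L1 L2 : comb_equiv L1 L2 -> e0 R L1 = e0 R L2.
Proof.
move=> e; rewrite (@e0_N L1 (cn L1 + cn L2).+1) ?ltnS ?leq_addr //.
rewrite (@e0_N L2 (cn L1 + cn L2).+1) ?ltnS ?leq_addl //.
by apply: eq_bigr => k _; rewrite (fn_equiv k e).
Qed.

Lemma fsum_local (b : int -> R) (K : complex) :
  fsum b K = b (-1) + \sum_(v in Vert K) h0 b (link K v).
Proof. by rewrite fsum_split -(local_gen (fun k => b k%:Z) K). Qed.

Lemma euler_local (K : complex) :
  (euler K)%:~R = \sum_(v in Vert K) e0 R (link K v).
Proof. by rewrite euler_split -(local_gen (fun k => (-1) ^+ k) K). Qed.

End Inv.

Definition verts (p : bool) : {set 'I_5} := [set j : 'I_5 | p || (nat_of_ord j != 4%N)].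
Definition adj (p : bool) (x y : 'I_5) : bool :=
  let e a b := ((nat_of_ord x == a) && (nat_of_ord y == b)) ||
               ((nat_of_ord x == b) && (nat_of_ord y == a)) in
  if p then [|| e 0 4, e 4 1, e 1 2, e 2 3 | e 3 0]%N
  else [|| e 0 1, e 1 2, e 2 3 | e 3 0]%N.
Definition pface p (A : {set 'I_5}) : bool :=
  (A \subset verts p) && [forall x in A, forall y in A, (x == y) || adj p x y].
Definition lface p a (A : {set 'I_5}) := [&& pface p A, a \notin A & pface p (a |: A)].

Definition nb1n (p : bool) (a : nat) : nat :=
  if p then match a with 0 => 4 | 4 => 1 | 1 => 2 | 2 => 3 | _ => 0 end
  else match a with 0 => 1 | 1 => 2 | 2 => 3 | _ => 0 end.
Definition nb2n (p : bool) (a : nat) : nat :=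
  if p then match a with 0 => 3 | 4 => 0 | 1 => 4 | 2 => 1 | _ => 2 end
  else match a with 0 => 3 | 1 => 0 | 2 => 1 | _ => 2 end.
Definition nb1 p (a : 'I_5) : 'I_5 := inord (nb1n p a).
Definition nb2 p (a : 'I_5) : 'I_5 := inord (nb2n p a).

Ltac ord5 x := case: x => [[|[|[|[|[|?]]]]] ?] //.

Lemma adj_sym p x y : adj p x y = adj p y x.
Proof. by case: p; ord5 x; ord5 y. Qed.
Lemma adj_verts p x y : adj p x y -> x \in verts p.
Proof. by rewrite inE; case: p; ord5 x; ord5 y. Qed.
Lemma adj_neq p x y : adj p x y -> x != y.
Proof. by case: p; ord5 x; ord5 y. Qed.
Lemma notri p x y z : adj p x y -> adj p x z -> y != z -> ~~ adj p y z.
Proof. by case: p; ord5 x; ord5 y; ord5 z. Qed.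
Lemma nb1_adj p a : a \in verts p -> adj p a (nb1 p a).
Proof. by rewrite inE /nb1; case: p; ord5 a => _; rewrite /adj /= inordK. Qed.
Lemma nb2_adj p a : a \in verts p -> adj p a (nb2 p a).
Proof. by rewrite inE /nb2; case: p; ord5 a => _; rewrite /adj /= inordK. Qed.
Lemma nb12 p a : a \in verts p -> nb1 p a != nb2 p a.
Proof.
rewrite inE /nb1 /nb2; case: p; ord5 a => _; apply/eqP => /(congr1 val);
  rewrite /= !inordK //.
Qed.
Lemma nb_all p a n : adj p a n -> (n == nb1 p a) || (n == nb2 p a).
Proof.
rewrite /nb1 /nb2; case: p; ord5 a; ord5 n => _; rewrite -!val_eqE /= !inordK //.
Qed.

Lemma pfaceP p (A : {set 'I_5}) :
  reflect (A \subset verts p /\ forall x y, x \in A -> y \in A -> x != y -> adj p x y)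
          (pface p A).
Proof.
apply: (iffP andP) => [[sA /forall_inP H]|[sA H]]; split => //.
  move=> x y xA yA xy; have /forall_inP /(_ y yA) := H x xA.
  by rewrite (negbTE xy).
apply/forall_inP => x xA; apply/forall_inP => y yA.
by case: eqP => [//|/eqP xy]; rewrite H.
Qed.

Lemma pface_sub p (A B : {set 'I_5}) : B \subset A -> pface p A -> pface p B.
Proof.
move=> BA /pfaceP [sA H]; apply/pfaceP; split; first exact: subset_trans sA.
by move=> x y xB yB; apply: H; apply: (subsetP BA).
Qed.

Lemma pface0 p : pface p set0.
Proof. by apply/pfaceP; split => [|x y]; rewrite ?sub0set ?inE. Qed.

Lemma pface1 p j : pface p [set j] = (j \in verts p).
Proof.
apply/pfaceP/idP => [[]|jv]; first by rewrite sub1set.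
by split => [|x y]; rewrite ?sub1set // !inE => /eqP -> /eqP ->; rewrite eqxx.
Qed.

Lemma pface2 p x y : adj p x y -> pface p [set x; y].
Proof.
move=> a; apply/pfaceP; split.
  by apply/subsetP => z; rewrite in_set2 => /orP [] /eqP ->;
     [apply: (adj_verts a) | rewrite adj_sym in a; apply: (adj_verts a)].
move=> u w; rewrite !in_set2 => /orP [] /eqP -> /orP [] /eqP ->; rewrite ?eqxx //.
by rewrite adj_sym.
Qed.

Lemma pface_edge p A : pface p A -> exists x y, adj p x y /\ A \subset [set x; y].
Proof.
move=> pA; have [sA H] := pfaceP _ _ pA.
have [A0|[x xA]] := set_0Vmem A.
  have v0 : (ord0 : 'I_5) \in verts p by rewrite inE; case: (p).
  by exists ord0, (nb1 p ord0); split; [apply: nb1_adj | rewrite A0 sub0set].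
have xv : x \in verts p by apply: (subsetP sA).
have [Ax|[y /setD1P [yx yA]]] := set_0Vmem (A :\ x).
  exists x, (nb1 p x); split; first exact: nb1_adj.
  apply/subsetP => z zA; rewrite !inE; case: (z =P x) => //= /eqP zx.
  have : z \in A :\ x by rewrite !inE zx zA.
  by rewrite Ax inE.
exists x, y; split; first by apply: H; rewrite // eq_sym.
apply/subsetP => z zA; rewrite !inE; case: (z =P x) => //= /eqP zx.
case: (z =P y) => //= /eqP zy.
have xy : x != y by rewrite eq_sym.
have xz : x != z by rewrite eq_sym.
have yz : y != z by rewrite eq_sym.
by have := notri (H _ _ xA yA xy) (H _ _ xA zA xz) yz; rewrite H.
Qed.

Lemma lface_char p a A : lface p a A ->
  A = set0 \/ exists n, adj p a n /\ A = [set n].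
Proof.
case/and3P => pA aA /pfaceP [_ H].
have [->|[n nA]] := set_0Vmem A; first by left.
right; exists n.
have an_ : a != n by apply: contraNneq aA => ->.
have an : adj p a n by apply: H; rewrite ?setU11 // !inE nA orbT.
split => //; apply/setP => z; rewrite inE; apply/idP/eqP => [zA|->//].
apply/eqP; apply/negPn/negP => zn.
have az : a != z by apply: contraNneq aA => ->.
have za : adj p a z by apply: H; rewrite ?setU11 // !inE zA orbT.
have := notri an za; rewrite eq_sym zn => /(_ isT).
by rewrite H // ?inE ?nA ?zA ?orbT // eq_sym.
Qed.

Lemma lface0 p a : a \in verts p -> lface p a set0.
Proof. by move=> av; rewrite /lface pface0 inE setU0 pface1 av. Qed.

Lemma lface1 p a n : adj p a n -> lface p a [set n].
Proof.
move=> an; have nv : n \in verts p by rewrite adj_sym in an; apply: adj_verts an.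
rewrite /lface pface1 nv /= !inE.
by rewrite (adj_neq an) pface2.
Qed.

Section Idx.
Variable k : nat.
Implicit Types (S T : {set 'I_(k * 5)}) (i : 'I_k) (j : 'I_5) (u : 'I_(k * 5)).

Definition idx (i : 'I_k) (j : 'I_5) : 'I_(k * 5) := mxvec_index i j.
Definition unidx (u : 'I_(k * 5)) : 'I_k * 'I_5 :=
  enum_val (cast_ord (esym (mxvec_cast k 5)) u).

Lemma idxK i j : unidx (idx i j) = (i, j).
Proof. by rewrite /unidx /idx /mxvec_index cast_ordK enum_rankK. Qed.

Lemma unidxK u : idx (unidx u).1 (unidx u).2 = u.
Proof. by case/mxvec_indexP: u => i j; rewrite -/(idx i j) idxK. Qed.

Lemma idx_inj i j i' j' : idx i j = idx i' j' -> i = i' /\ j = j'.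
Proof. by move/(congr1 unidx); rewrite !idxK => -[-> ->]. Qed.

Lemma idx_eq i j i' j' : (idx i j == idx i' j') = (i == i') && (j == j').
Proof.
apply/eqP/andP => [/idx_inj [-> ->]//|[/eqP -> /eqP ->]//].
Qed.

Definition blk (S : {set 'I_(k * 5)}) (i : 'I_k) : {set 'I_5} := [set j | idx i j \in S].

Lemma blk_inj S T : (forall i, blk S i = blk T i) -> S = T.
Proof.
move=> H; apply/setP => u; rewrite -(unidxK u).
by have /setP /(_ (unidx u).2) := H (unidx u).1; rewrite !inE.
Qed.

Lemma blk0 i : blk set0 i = set0.
Proof. by apply/setP => j; rewrite !inE. Qed.

Lemma blkS S T i : S \subset T -> blk S i \subset blk T i.
Proof. by move=> ST; apply/subsetP => j; rewrite !inE; apply: (subsetP ST). Qed.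

Lemma blkU S T i : blk (S :|: T) i = blk S i :|: blk T i.
Proof. by apply/setP => j; rewrite !inE. Qed.

Lemma blk1 i j i' : blk [set idx i j] i' = if i' == i then [set j] else set0.
Proof.
apply/setP => j'; rewrite !inE idx_eq; case: eqVneq => _; by rewrite ?inE.
Qed.

Lemma blkD1 S i j i' : blk (S :\ idx i j) i' = if i' == i then blk S i' :\ j else blk S i'.
Proof.
apply/setP => j'; rewrite !inE idx_eq; case: eqVneq => _; by rewrite ?inE //= andbC.
Qed.

End Idx.

Section Kdef.
Variables (k : nat) (s : {ffun 'I_k -> bool}).

Definition Kfaces : {set {set 'I_(k * 5)}} :=
  [set S | [forall i, pface (s i) (blk S i)]].

Lemma Kfaces_set0 : set0 \in Kfaces.
Proof. by rewrite inE; apply/forallP => i; rewrite blk0 pface0. Qed.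

Lemma Kfaces_closed : [forall S in Kfaces, forall T : {set 'I_(k * 5)},
                    (T \subset S) ==> (T \in Kfaces)].
Proof.
apply/forall_inP => S; rewrite inE => /forallP H; apply/forallP => T; apply/implyP => TS.
by rewrite inE; apply/forallP => i; apply: (pface_sub (blkS i TS)).
Qed.

Definition Kc : complex := @Complex (k * 5) Kfaces Kfaces_set0 Kfaces_closed.

Lemma inK (S : {set 'I_(k * 5)}) : (S \in faces Kc) = [forall i, pface (s i) (blk S i)].
Proof. by rewrite inE. Qed.

Lemma vertK i j : (idx i j \in Vert Kc) = (j \in verts (s i)).
Proof.
rewrite inE inK; apply/forallP/idP => [/(_ i)|jv i']; first by rewrite blk1 eqxx pface1.
by rewrite blk1; case: (i' =P i) => [->|]; rewrite ?pface1 ?pface0.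
Qed.

Lemma linkK i a (S : {set 'I_(k * 5)}) : a \in verts (s i) ->
  (S \in faces (link Kc (idx i a))) =
  [forall i', if i' == i then lface (s i) a (blk S i') else pface (s i') (blk S i')].
Proof.
move=> av; rewrite /= /link_faces in_setU in_set1 inE.
case: (S =P set0) => [->|_]; rewrite ?orbT ?orbF.
  symmetry; apply/forallP => i'; rewrite blk0; case: (i' == i);
    by rewrite ?lface0 ?pface0.
rewrite inK inK; apply/and3P/forallP => [[/forallP H1 vS /forallP H2] i'|H].
  case: (i' =P i) => [->|/eqP ne]; last exact: H1.
  rewrite /lface H1 /=; move: (H2 i); rewrite blkU blk1 eqxx => ->.
  by rewrite andbT inE.
split.
- apply/forallP => i'; have := H i'; case: (i' =P i) => [->|//].
  by case/and3P.
- by have := H i; rewrite eqxx => /and3P [_ + _]; rewrite inE.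
- apply/forallP => i'; have := H i'; rewrite blkU blk1.
  case: (i' =P i) => [->|_]; last by rewrite set0U.
  by case/and3P.
Qed.

End Kdef.

Section Equiv.
Variables (k : nat) (s s' : {ffun 'I_k -> bool}) (i : 'I_k) (a a' : 'I_5).

Definition sig5 (j : 'I_5) : 'I_5 :=
  if j == nb1 (s i) a then nb1 (s' i) a'
  else if j == nb2 (s i) a then nb2 (s' i) a' else j.

Definition fmap (u : 'I_(k * 5)) : 'I_(k * 5) :=
  if (unidx u).1 == i then idx i (sig5 (unidx u).2) else u.

Lemma fmap_idx i0 j0 : fmap (idx i0 j0) = if i0 == i then idx i (sig5 j0) else idx i0 j0.
Proof. by rewrite /fmap idxK. Qed.

Lemma blk_fmap (S : {set 'I_(k * 5)}) i' :
  blk (fmap @: S) i' = if i' == i then sig5 @: blk S i else blk S i'.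
Proof.
apply/setP => j; rewrite inE; apply/imsetP/idP.
  case=> u uS; rewrite -(unidxK u) in uS *; case: (unidx u) uS => i0 j0 /= uS.
  rewrite fmap_idx; case: (i0 =P i) => [e|ne] /idx_inj [-> ->].
    by rewrite eqxx; apply/imsetP; exists j0; rewrite ?inE -?e.
  by case: (i0 =P i) ne => // _ _; rewrite inE.
case: (i' =P i) => [->|ne].
  case/imsetP => j0; rewrite inE => j0S ->; exists (idx i j0) => //.
  by rewrite fmap_idx eqxx.
rewrite inE => jS; exists (idx i' j) => //.
by rewrite fmap_idx; case: (i' =P i) ne.
Qed.

Hypothesis ss' : forall i0, i0 != i -> s i0 = s' i0.
Hypothesis av : a \in verts (s i).
Hypothesis av' : a' \in verts (s' i).

Lemma sig5_adj n : adj (s i) a n -> adj (s' i) a' (sig5 n).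
Proof.
rewrite /sig5 => an; case/orP: (nb_all an) => /eqP ->; rewrite eqxx.
  exact: nb1_adj.
by rewrite eq_sym (negbTE (nb12 av)); exact: nb2_adj.
Qed.

Lemma fmap_faces (S : {set 'I_(k * 5)}) :
  S \in faces (link (Kc s) (idx i a)) -> fmap @: S \in faces (link (Kc s') (idx i a')).
Proof.
rewrite (@linkK _ _ _ _ _ av) (@linkK _ _ _ _ _ av') => /forallP H; apply/forallP => i'.
rewrite blk_fmap; have := H i'; case: (i' =P i) => [->|/eqP ne].
  case/lface_char => [->|[n [an ->]]].
    by rewrite imset0 lface0.
  by rewrite imset_set1; apply: lface1; apply: sig5_adj.
by rewrite ss'.
Qed.

End Equiv.

Lemma fmapK k (s s' : {ffun 'I_k -> bool}) i a a' :
  a \in verts (s i) -> a' \in verts (s' i) ->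
  forall u, u \in Vert (link (Kc s) (idx i a)) ->
  fmap s' s i a' a (fmap s s' i a a' u) = u.
Proof.
move=> av av' u; rewrite inE (@linkK _ _ _ _ _ av) -(unidxK u).
case: (unidx u) => i0 j0 /= /forallP /(_ i0); rewrite blk1 eqxx.
have [->|ne] := eqVneq i0 i; last first.
  by move=> _; rewrite fmap_idx (negbTE ne) fmap_idx (negbTE ne).
rewrite fmap_idx eqxx fmap_idx eqxx.
case/lface_char => [E|[n [an E]]].
  by move/setP: E => /(_ j0); rewrite !inE eqxx.
move/setP: E => /(_ j0); rewrite !inE eqxx => /esym /eqP ->; congr idx.
rewrite /sig5; case/orP: (nb_all an) => /eqP ->; idtac.
  by rewrite !eqxx.
have h1 : (nb2 (s i) a == nb1 (s i) a) = false by rewrite eq_sym (negbTE (nb12 av)).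
have h2 : (nb2 (s' i) a' == nb1 (s' i) a') = false by rewrite eq_sym (negbTE (nb12 av')).
by rewrite h1 ?h2 !eqxx ?h2.
Qed.

Lemma link_equiv k (s s' : {ffun 'I_k -> bool}) i a a' :
  (forall i0, i0 != i -> s i0 = s' i0) ->
  a \in verts (s i) -> a' \in verts (s' i) ->
  comb_equiv (link (Kc s) (idx i a)) (link (Kc s') (idx i a')).
Proof.
move=> ss' av av'.
have s's : forall i0, i0 != i -> s' i0 = s i0 by move=> i0 /ss' ->.
exists (fmap s s' i a a'), (fmap s' s i a' a); split.
- exact: fmap_faces.
- exact: fmap_faces.
- exact: fmapK.
- exact: fmapK.
Qed.

Lemma flagK k (s : {ffun 'I_k -> bool}) : flag (Kc s).
Proof.
move=> S SV H; rewrite inK; apply/forallP => i; apply/pfaceP; split.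
  apply/subsetP => j; rewrite inE => jS.
  by have := subsetP SV _ jS; rewrite vertK.
move=> x y; rewrite !inE => xS yS xy.
have ne : idx i x != idx i y by rewrite idx_eq eqxx /=.
have := H _ _ xS yS ne; rewrite inK => /forallP /(_ i).
rewrite blkU !blk1 eqxx => /pfaceP [_]; apply; by rewrite ?inE ?eqxx ?orbT.
Qed.

Lemma card_verts p : #|verts p| = (if p then 5 else 4)%N.
Proof.
case: p.
  by rewrite (_ : verts true = setT) ?cardsT ?card_ord //; apply/setP => j; rewrite !inE.
rewrite (_ : verts false = [set~ ord_max]) ?cardsC1 ?card_ord //.
by apply/setP => j; rewrite !inE -val_eqE.
Qed.

Lemma ord0_verts p : (ord0 : 'I_5) \in verts p.
Proof. by rewrite inE; case: p. Qed.

Section Cancel.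
Variables (R : numFieldType) (k : nat) (g : complex -> R).
Hypothesis ginv : forall (s s' : {ffun 'I_k -> bool}) i a a',
  (forall i0, i0 != i -> s i0 = s' i0) -> a \in verts (s i) -> a' \in verts (s' i) ->
  g (link (Kc s) (idx i a)) = g (link (Kc s') (idx i a')).

Definition wt (b : bool) : R := if b then -4 else 5.
Definition W (s : {ffun 'I_k -> bool}) : R := \prod_(i < k) wt (s i).

Lemma sumW : \sum_(s : {ffun 'I_k -> bool}) W s = 1.
Proof.
rewrite /W -(bigA_distr_bigA (fun (i : 'I_k) b => wt b)) /=.
rewrite big1 // => i _; rewrite big_bool /wt /=; ring.
Qed.

Lemma sum_vert (s : {ffun 'I_k -> bool}) (F : 'I_(k * 5) -> R) :
  \sum_(v in Vert (Kc s)) F v = \sum_(i < k) \sum_(j in verts (s i)) F (idx i j).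
Proof.
rewrite pair_big_dep /=.
rewrite (reindex (fun p : 'I_k * 'I_5 => idx p.1 p.2)) /=; last first.
  exists (@unidx k) => [p _|u _]; first by case: p => i j; rewrite idxK.
  exact: unidxK.
by apply: eq_bigl => -[i j]; rewrite /= vertK.
Qed.

Definition Ls (s : {ffun 'I_k -> bool}) i := link (Kc s) (idx i ord0).

Lemma sum_link (s : {ffun 'I_k -> bool}) :
  \sum_(v in Vert (Kc s)) g (link (Kc s) v) =
  \sum_(i < k) (#|verts (s i)|)%:R * g (Ls s i).
Proof.
rewrite sum_vert; apply: eq_bigr => i _.
rewrite -sum1_card natr_sum big_distrl /=; apply: eq_bigr => j jv.
by rewrite mul1r /Ls (@ginv s s i j ord0) // ord0_verts.
Qed.

Definition flip (i : 'I_k) (s : {ffun 'I_k -> bool}) : {ffun 'I_k -> bool} :=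
  [ffun j => if j == i then ~~ s j else s j].

Lemma flipK i : involutive (flip i).
Proof.
move=> s; apply/ffunP => j; rewrite !ffunE; case: (j == i) => //; exact: negbK.
Qed.

Lemma W_flip i s :
  W (flip i s) * (#|verts (flip i s i)|)%:R = - (W s * (#|verts (s i)|)%:R).
Proof.
rewrite /W (bigD1 i) // [in RHS](bigD1 i) //=.
rewrite (eq_bigr (fun j => wt (s j))); last first.
  by move=> j ji; rewrite ffunE (negbTE ji).
rewrite !ffunE eqxx !card_verts /wt.
by case: (s i) => /=; ring.
Qed.


Lemma flip_agree (i : 'I_k) (s : {ffun 'I_k -> bool}) : forall i0, i0 != i -> s i0 = flip i s i0.
Proof. by move=> i0 ne; rewrite ffunE (negbTE ne). Qed.

Lemma cancel_sum :
  \sum_(s : {ffun 'I_k -> bool}) W s * \sum_(v in Vert (Kc s)) g (link (Kc s) v) = 0.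
Proof.
under eq_bigr => s _ do rewrite sum_link big_distrr /=.
rewrite exchange_big /=; apply: big1 => i _.
set F := fun s : {ffun 'I_k -> bool} => W s * ((#|verts (s i)|)%:R * g (Ls s i)).
have HF : forall s, F (flip i s) = - F s.
  move=> s; rewrite /F !mulrA W_flip mulNr; congr (- (_ * _)).
  by rewrite /Ls -(@ginv s (flip i s) i ord0 ord0) ?ord0_verts //; apply: flip_agree.
have E : \sum_s F s = - \sum_s F s.
  rewrite {1}(reindex_inj (inv_inj (flipK i))) /=.
  by rewrite -sumrN; apply: eq_bigr => s _; rewrite HF.
have : (\sum_s F s) *+ 2 == 0 by rewrite mulr2n {1}E addNr.
by rewrite mulrn_eq0 /= => /eqP.
Qed.

End Cancel.

Section Block.
Variable R : realType.

Definition pp (t : R) : R := (t + `|t|) / 2.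
Definition mn (a b : R) : R := (a + b - `|a - b|) / 2.

Definition wf (p : bool) (j : 'I_5) (y1 y2 : R) : R :=
  if p then
    match nat_of_ord j with
    | 0 => pp (y1 - pp y2) | 1 => pp (y2 - pp y1) | 2 => pp (- y1)
    | 3 => pp (- y2) | _ => pp (mn y1 y2) end
  else
    match nat_of_ord j with
    | 0 => pp y1 | 1 => pp y2 | 2 => pp (- y1) | 3 => pp (- y2) | _ => 0 end.

Definition pos (c : bool) (j : 'I_5) : R :=
  if c then match nat_of_ord j with 1 => 1 | 3 => -1 | 4 => 1 | _ => 0 end
  else match nat_of_ord j with 0 => 1 | 2 => -1 | 4 => 1 | _ => 0 end.

Ltac nsplit :=
  repeat match goal with
  | |- context [`|?t|] =>
      lazymatch t with context [`|_|] => fail | _ => idtac end;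
      let H := fresh "H" in
      case: (lerP 0 t) => H;
      [rewrite (ger0_norm H) | rewrite (ltr0_norm H)]
  end.

Ltac nsplit_all :=
  rewrite /pp /mn; nsplit; lra.

Lemma sum5 (F : 'I_5 -> R) : \sum_(j < 5) F j =
  F (@Ordinal 5 0 isT) + F (@Ordinal 5 1 isT) + F (@Ordinal 5 2 isT)
  + F (@Ordinal 5 3 isT) + F (@Ordinal 5 4 isT).
Proof.
rewrite !big_ord_recl big_ord0 addr0 !addrA.
by congr (_ + _ + _ + _ + _); congr F; apply: val_inj.
Qed.

Lemma wf_ge0 p j y1 y2 : 0 <= wf p j y1 y2.
Proof. (by rewrite /wf; case: p; ord5 j; simpl; nsplit_all). Qed.



Lemma wf_edge p (x y : 'I_5) (u v : R) : adj p x y -> 0 <= u -> 0 <= v ->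
  forall j, wf p j (u * pos false x + v * pos false y) (u * pos true x + v * pos true y)
            = (if j == x then u else if j == y then v else 0).
Proof.
move=> + u0 v0 j.
(case: p; ord5 x; ord5 y; ord5 j; rewrite /wf /pos /=; nsplit_all).
Qed.


Lemma region p (y1 y2 : R) : exists x y (u v : R), [/\ adj p x y, 0 <= u, 0 <= v,
  y1 = u * pos false x + v * pos false y & y2 = u * pos true x + v * pos true y].
Proof.
case: p; case: (lerP 0 y1) => h1; case: (lerP 0 y2) => h2.
- case: (lerP y2 y1) => h3.
  + exists (@Ordinal 5 0 isT), (@Ordinal 5 4 isT), (y1 - y2), y2; split => //=; lra.
  + exists (@Ordinal 5 4 isT), (@Ordinal 5 1 isT), y1, (y2 - y1); split => //=; lra.
- exists (@Ordinal 5 3 isT), (@Ordinal 5 0 isT), (- y2), y1; split => //=; lra.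
- exists (@Ordinal 5 1 isT), (@Ordinal 5 2 isT), y2, (- y1); split => //=; lra.
- exists (@Ordinal 5 2 isT), (@Ordinal 5 3 isT), (- y1), (- y2); split => //=; lra.
- exists (@Ordinal 5 0 isT), (@Ordinal 5 1 isT), y1, y2; split => //=; lra.
- exists (@Ordinal 5 3 isT), (@Ordinal 5 0 isT), (- y2), y1; split => //=; lra.
- exists (@Ordinal 5 1 isT), (@Ordinal 5 2 isT), y2, (- y1); split => //=; lra.
- exists (@Ordinal 5 2 isT), (@Ordinal 5 3 isT), (- y1), (- y2); split => //=; lra.
Qed.

Lemma sum_sel (x y : 'I_5) (u v : R) (F : 'I_5 -> R) : x != y ->
  \sum_j (if j == x then u else if j == y then v else 0) * F j = u * F x + v * F y.
Proof.
move=> xy; rewrite (bigD1 x) //= eqxx (bigD1 y) 1?eq_sym //= eqxx (negbTE xy) addrA.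
rewrite big1 ?addr0 // => j /andP [jx jy]; by rewrite (negbTE jx) (negbTE jy) mul0r.
Qed.

Lemma wf_rec p c y1 y2 : \sum_(j < 5) wf p j y1 y2 * pos c j = if c then y2 else y1.
Proof.
have [x [y [u [v [a u0 v0 e1 e2]]]]] := region p y1 y2.
rewrite e1 e2; under eq_bigr => j _ do rewrite (wf_edge a u0 v0 j).
by rewrite sum_sel ?(adj_neq a) //; case: c.
Qed.

Lemma wf_sum p y1 y2 : \sum_(j < 5) wf p j y1 y2 = 0 -> y1 = 0 /\ y2 = 0.
Proof.
move=> H; have Z : forall j, wf p j y1 y2 = 0.
  move=> j; apply/eqP; move/eqP: H; rewrite psumr_eq0; last by move=> *; apply: wf_ge0.
  by move/allP => /(_ j (mem_index_enum _)) /implyP; apply.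
have := wf_rec p false y1 y2; have := wf_rec p true y1 y2.
by rewrite !big1 // => j _; rewrite Z mul0r.
Qed.

Lemma wf_supp p (y1 y2 : R) : exists x y, adj p x y /\ (forall j : 'I_5, j != x -> j != y -> wf p j y1 y2 = 0).
Proof.
have [x [y [u [v [a u0 v0 e1 e2]]]]] := region p y1 y2.
exists x, y; split => // j jx jy; rewrite e1 e2 (wf_edge a u0 v0 j).
by rewrite (negbTE jx) (negbTE jy).
Qed.

Lemma wf_hom p j (t y1 y2 : R) : 0 <= t -> wf p j (t * y1) (t * y2) = t * wf p j y1 y2.
Proof.
move=> t0; have [x [y [u [v [a u0 v0 e1 e2]]]]] := region p y1 y2.
have tu : 0 <= t * u by apply: mulr_ge0.
have tv : 0 <= t * v by apply: mulr_ge0.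
have E1 : t * y1 = (t * u) * pos false x + (t * v) * pos false y by rewrite e1; ring.
have E2 : t * y2 = (t * u) * pos true x + (t * v) * pos true y by rewrite e2; ring.
rewrite E1 E2 (wf_edge a tu tv) e1 e2 (wf_edge a u0 v0).
by case: (j == x); case: (j == y); rewrite ?mulr0.
Qed.

End Block.

Arguments pos {R}.

Lemma sum_idx (R : nmodType) k (F : 'I_(k * 5) -> R) :
  \sum_u F u = \sum_(i < k) \sum_(j < 5) F (idx i j).
Proof.
rewrite pair_big /=.
rewrite (reindex (fun p : 'I_k * 'I_5 => idx p.1 p.2)) /=; last first.
  exists (@unidx k) => [p _|u _]; first by case: p => i j; rewrite idxK.
  exact: unidxK.
by apply: eq_bigr => -[i j].
Qed.

Lemma wf00 (R : realType) p j : wf p j 0 0 = 0 :> R.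
Proof. by have := @wf_hom R p j 0 0 0 (lexx _); rewrite !mul0r. Qed.

Section SIdx.
Variables (k d : nat) (hd : (k * 2)%N = d.+1).

Definition b2o (c : bool) : 'I_2 := if c then ord_max else ord0.
Definition sidx (i : 'I_k) (c : bool) : 'I_(d.+1) := cast_ord hd (mxvec_index i (b2o c)).
Definition unsidx (l : 'I_(d.+1)) : 'I_k * bool :=
  let p := enum_val (cast_ord (esym (mxvec_cast k 2)) (cast_ord (esym hd) l)) in
  (p.1, nat_of_ord p.2 != 0%N).

Lemma sidxK i c : unsidx (sidx i c) = (i, c).
Proof.
by rewrite /unsidx /sidx /mxvec_index !cast_ordK enum_rankK /=; case: c.
Qed.

Lemma unsidxK l : sidx (unsidx l).1 (unsidx l).2 = l.
Proof.
rewrite -[l](cast_ordKV hd); case/mxvec_indexP: (cast_ord (esym hd) l) => i c.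
rewrite /unsidx /sidx /mxvec_index !cast_ordK enum_rankK /=; congr (cast_ord _ _).
congr (cast_ord _ (enum_rank (_, _))); apply: val_inj; case: c => [[|[|?]] ?] //=.
Qed.

Lemma sum_sidx (R : nmodType) (F : 'I_(d.+1) -> R) :
  \sum_l F l = \sum_(i < k) \sum_(c : bool) F (sidx i c).
Proof.
rewrite pair_big /=.
rewrite (reindex (fun p : 'I_k * bool => sidx p.1 p.2)) /=; last first.
  exists unsidx => [p _|l _]; first by case: p => i j; rewrite sidxK.
  exact: unsidxK.
by apply: eq_bigr => -[i j].
Qed.

End SIdx.

Section Geo.
Variables (R : realType) (k d : nat) (hd : (k * 2)%N = d.+1) (s : {ffun 'I_k -> bool}).

Definition Y (x : 'rV[R]_(k * 5)) i (c : bool) : R := \sum_(j < 5) x ord0 (idx i j) * pos c j.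
Definition SS x := \sum_(i < k) \sum_(c : bool) (Y x i c) ^+ 2.
Definition nY x := Num.sqrt (SS x).
Definition Fm (x : 'rV[R]_(k * 5)) : 'rV[R]_(d.+1) :=
  \row_l (Y x (unsidx hd l).1 (unsidx hd l).2 / nY x).
Definition zc (z : 'rV[R]_(d.+1)) i c := z ord0 (sidx hd i c).
Definition Gz z := \sum_(i < k) \sum_(j < 5) wf (s i) j (zc z i false) (zc z i true).
Definition Gm (z : 'rV[R]_(d.+1)) : 'rV[R]_(k * 5) :=
  \row_u (wf (s (unidx u).1) (unidx u).2 (zc z (unidx u).1 false) (zc z (unidx u).1 true)
          / Gz z).

Definition RL (x : 'rV[R]_(k * 5)) : Prop :=
  (forall i, 0 <= x ord0 i) /\ \sum_i x ord0 i = 1 /\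
  finset (fun i => x ord0 i != 0) \in faces (Kc s).

Definition SP (z : 'rV[R]_(d.+1)) : Prop := \sum_i z ord0 i ^+ 2 = 1.

Lemma real_edge x : RL x -> forall i, exists a b, adj (s i) a b /\
  (forall j, j != a -> j != b -> x ord0 (idx i j) = 0).
Proof.
case=> _ [_ F] i; move: F; rewrite inK => /forallP /(_ i) /pface_edge [a [b [ab sub]]].
exists a, b; split => // j ja jb; apply/eqP; apply/negPn/negP => nz.
have : j \in blk [set u | x ord0 u != 0] i by rewrite !inE.
by move/(subsetP sub); rewrite !inE (negbTE ja) (negbTE jb).
Qed.

Lemma KX x : RL x -> forall i j, wf (s i) j (Y x i false) (Y x i true) = x ord0 (idx i j).
Proof.
move=> rx i j; have [a [b [ab Z]]] := real_edge rx i.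
have [_ [_ F]] := rx.
have E : forall j, x ord0 (idx i j) = if j == a then x ord0 (idx i a)
                     else if j == b then x ord0 (idx i b) else 0.
  move=> j'; case: (j' =P a) => [->//|/eqP ja]; case: (j' =P b) => [->//|/eqP jb].
  exact: Z.
have Yc : forall c, Y x i c = x ord0 (idx i a) * pos c a + x ord0 (idx i b) * pos c b.
  move=> c; rewrite /Y; under eq_bigr => j' _ do rewrite E.
  by rewrite sum_sel // (adj_neq ab).
have [x0 _] := rx.
by rewrite !Yc (wf_edge ab (x0 _) (x0 _)) -E.
Qed.

Lemma SS_pos x : RL x -> 0 < SS x.
Proof.
move=> rx; rewrite lt_def; have S0 : 0 <= SS x by apply: sumr_ge0 => i _; apply: sumr_ge0 => c _; apply: sqr_ge0.
rewrite S0 andbT; apply/negP => /eqP Z.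
have Y0 : forall i c, Y x i c = 0.
  move=> i c; move: Z; rewrite /SS => /eqP; rewrite psumr_eq0; last first.
    by move=> i' _; apply: sumr_ge0 => c' _; apply: sqr_ge0.
  move/allP => /(_ i (mem_index_enum _)) /=; rewrite psumr_eq0; last by move=> *; apply: sqr_ge0.
  by move/allP => /(_ c (mem_index_enum _)) /=; rewrite sqrf_eq0 => /eqP.
have [_ [S1 _]] := rx.
move: S1; rewrite sum_idx big1 => [|i _]; first by move/eqP; rewrite eq_sym oner_eq0.
by apply: big1 => j _; rewrite -(KX rx) !Y0 wf00.
Qed.

Lemma sum_real x : RL x -> \sum_(i < k) \sum_(j < 5) wf (s i) j (Y x i false) (Y x i true) = 1.
Proof.
move=> rx; have [_ [S1 _]] := rx; rewrite -S1 sum_idx.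
by apply: eq_bigr => i _; apply: eq_bigr => j _; rewrite KX.
Qed.

Lemma Fm_zc x i c : zc (Fm x) i c = Y x i c / nY x.
Proof. by rewrite /zc /Fm mxE sidxK. Qed.

Lemma Fm_sphere x : RL x -> SP (Fm x).
Proof.
move=> rx; rewrite /SP (sum_sidx hd).
under eq_bigr => i _ do under eq_bigr => c _ do rewrite -/(zc _ _ _) Fm_zc expr_div_n.
rewrite (eq_bigr (fun i => (\sum_c Y x i c ^+ 2) / nY x ^+ 2)); last first.
  by move=> i _; rewrite big_distrl.
rewrite -big_distrl /= -/(SS x) /nY sqr_sqrtr ?divff //.
  by rewrite gt_eqF // SS_pos.
by rewrite ltW // SS_pos.
Qed.

Lemma Gm_Fm x : RL x -> Gm (Fm x) = x.
Proof.
move=> rx; have n0 : 0 < nY x by rewrite sqrtr_gt0 SS_pos.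
have W : forall i j, wf (s i) j (zc (Fm x) i false) (zc (Fm x) i true) = x ord0 (idx i j) / nY x.
  move=> i j; rewrite !Fm_zc ![_ / nY x]mulrC wf_hom ?invr_ge0 ?ltW // KX // mulrC.
have G : Gz (Fm x) = 1 / nY x.
  rewrite /Gz; under eq_bigr => i _ do under eq_bigr => j _ do rewrite W.
  rewrite (eq_bigr (fun i => (\sum_j x ord0 (idx i j)) / nY x)); last by move=> *; rewrite big_distrl.
  rewrite -big_distrl /= -sum_idx; have [_ [-> _]] := rx; by [].
apply/rowP => u; rewrite mxE W G -[in RHS](unidxK u).
by rewrite div1r invrK -mulrA mulVf ?mulr1 ?gt_eqF.
Qed.


Lemma Gz_ge0 z : 0 <= Gz z.
Proof. by apply: sumr_ge0 => i _; apply: sumr_ge0 => j _; apply: wf_ge0. Qed.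

Lemma Gz_pos z : SP z -> 0 < Gz z.
Proof.
move=> sz; rewrite lt_def Gz_ge0 andbT; apply/negP => /eqP Z.
have B : forall i, \sum_(j < 5) wf (s i) j (zc z i false) (zc z i true) = 0.
  move=> i; apply/eqP; move: Z => /eqP; rewrite psumr_eq0; last first.
    by move=> i' _; apply: sumr_ge0 => j _; apply: wf_ge0.
  by move/allP => /(_ i (mem_index_enum _)).
move: sz; rewrite /SP (sum_sidx hd) big1 => [|i _]; first by move/eqP; rewrite eq_sym oner_eq0.
have [h0 h1] := wf_sum (B i).
by rewrite big_bool /= -!/(zc z i _) h0 h1 expr0n /= addr0.
Qed.

Lemma Gm_real z : SP z -> RL (Gm z).
Proof.
move=> sz; have G0 := Gz_pos sz; split; [|split].
- by move=> u; rewrite mxE divr_ge0 ?wf_ge0 ?ltW.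
- rewrite sum_idx; under eq_bigr => i _ do under eq_bigr => j _ do rewrite mxE idxK /=.
  rewrite (eq_bigr (fun i => (\sum_j wf (s i) j (zc z i false) (zc z i true)) / Gz z)).
    by rewrite -big_distrl /= divff ?gt_eqF.
  by move=> i _; rewrite big_distrl.
- rewrite inK; apply/forallP => i.
  have [a [b [ab Z]]] := wf_supp (s i) (zc z i false) (zc z i true).
  apply: (pface_sub _ (pface2 ab)); apply/subsetP => j; rewrite !inE mxE idxK /=.
  apply: contraR; rewrite negb_or => /andP [ja jb].
  by rewrite Z // mul0r.
Qed.

Lemma Y_Gm z i c : Y (Gm z) i c = zc z i c / Gz z.
Proof.
rewrite /Y; under eq_bigr => j _ do rewrite mxE idxK /= mulrAC.
by rewrite -big_distrl /= wf_rec; case: c.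
Qed.

Lemma Fm_Gm z : SP z -> Fm (Gm z) = z.
Proof.
move=> sz; have G0 := Gz_pos sz.
have N : nY (Gm z) = 1 / Gz z.
  rewrite /nY /SS; under eq_bigr => i _ do under eq_bigr => c _ do rewrite Y_Gm expr_div_n.
  rewrite (eq_bigr (fun i => (\sum_c zc z i c ^+ 2) / Gz z ^+ 2)); last first.
    by move=> i _; rewrite big_distrl.
  rewrite -big_distrl /= (_ : \sum_i \sum_c zc z i c ^+ 2 = 1); last first.
    by rewrite -sz (sum_sidx hd).
  have -> : 1 / Gz z ^+ 2 = (1 / Gz z) ^+ 2 by rewrite expr_div_n expr1n.
  by rewrite sqrtr_sqr ger0_norm // divr_ge0 // ltW.
apply/rowP => l; rewrite mxE Y_Gm N /zc unsidxK.
by rewrite div1r invrK -mulrA mulVf ?mulr1 ?gt_eqF.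
Qed.

End Geo.

Import numFieldNormedType.Exports.

Section CT.
Variables (R : realType) (X : topologicalType).
Implicit Types (f g : X -> R) (x : X).

Definition CT f x := {for x, continuous f}.

Lemma ct_cst (c : R) x : CT (fun _ => c) x.
Proof. exact: cst_continuous. Qed.

Lemma ct_add f g x : CT f x -> CT g x -> CT (fun y => f y + g y) x.
Proof. by move=> hf hg; apply: (continuousD hf hg). Qed.

Lemma ct_mul f g x : CT f x -> CT g x -> CT (fun y => f y * g y) x.
Proof. by move=> hf hg; apply: (continuousM hf hg). Qed.

Lemma ct_opp f x : CT f x -> CT (fun y => - f y) x.
Proof. by move=> hf; apply: (continuousN hf). Qed.

Lemma ct_inv f x : f x != 0 -> CT f x -> CT (fun y => (f y)^-1) x.
Proof. by move=> h hf; apply: (continuousV h hf). Qed.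

Lemma ct_norm f x : CT f x -> CT (fun y => `|f y|) x.
Proof. by move=> hf; apply: (continuous_comp hf); apply: norm_continuous. Qed.

Lemma ct_sqrt f x : CT f x -> CT (fun y => Num.sqrt (f y)) x.
Proof. by move=> hf; apply: (continuous_comp hf); apply: sqrt_continuous. Qed.

Lemma ct_sum (I : finType) (F : I -> X -> R) x :
  (forall i, CT (F i) x) -> CT (fun y => \sum_i F i y) x.
Proof.
move=> H.
suff : forall r : seq I, CT (fun y => \sum_(i <- r) F i y) x by apply.
elim=> [|a r IH].
  by rewrite (_ : (fun y => _) = fun _ => 0); [apply: ct_cst | apply: funext => y; rewrite big_nil].
rewrite (_ : (fun y => _) = fun y => F a y + \sum_(i <- r) F i y).
  exact: ct_add.
by apply: funext => y; rewrite big_cons.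
Qed.

End CT.

Lemma ct_coord (R : realType) m n (i : 'I_m) (j : 'I_n) (x : 'M[R]_(m, n)) :
  CT (fun M : 'M[R]_(m, n) => M i j) x.
Proof. exact: coord_continuous. Qed.

Lemma ct_mx (R : realType) (X : topologicalType) m n (f : X -> 'M[R]_(m, n)) x :
  (forall i j, CT (fun y => f y i j) x) -> {for x, continuous f}.
Proof.
move=> H; rewrite /continuous_at.
apply/cvg_mx_entourageP => A entA.
apply: filter_forall => i; apply: filter_forall => j.
have := H i j; rewrite /CT /continuous_at => /cvg_app_entourageP /(_ A entA).
move=> Hn; rewrite near_map; apply: (filterS _ Hn) => y hy; by rewrite in_setE.
Qed.

Section CT2.
Variables (R : realType) (X : topologicalType).
Implicit Types (f g : X -> R) (x : X).

Lemma ct_pp f x : CT f x -> CT (fun y => pp (f y)) x.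
Proof.
move=> hf; rewrite /pp; apply: ct_mul; last exact: ct_cst.
by apply: ct_add => //; apply: ct_norm.
Qed.

Lemma ct_mn f g x : CT f x -> CT g x -> CT (fun y => mn (f y) (g y)) x.
Proof.
move=> hf hg; rewrite /mn; apply: ct_mul; last exact: ct_cst.
apply: ct_add; first exact: ct_add.
by apply: ct_opp; apply: ct_norm; apply: ct_add => //; apply: ct_opp.
Qed.

Lemma ct_sub f g x : CT f x -> CT g x -> CT (fun y => f y - g y) x.
Proof. by move=> hf hg; apply: ct_add => //; apply: ct_opp. Qed.

Lemma ct_wf p j f g x : CT f x -> CT g x -> CT (fun y => wf p j (f y) (g y)) x.
Proof.
move=> hf hg; rewrite /wf; case: p; case: j => [[|[|[|[|[|?]]]]] ?] /=;
  rewrite ?(_ : (fun _ => 0) = fun _ : X => (0 : R)) //;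
  by repeat first [ apply: ct_pp | apply: ct_mn | apply: ct_sub | apply: ct_opp
                  | exact: ct_cst | exact: hf | exact: hg ].
Qed.

End CT2.

Section GeoCT.
Variables (R : realType) (k d : nat) (hd : (k * 2)%N = d.+1) (s : {ffun 'I_k -> bool}).

Lemma ct_Y i c (x : 'rV[R]_(k * 5)) : CT (fun y => Y y i c) x.
Proof.
apply: ct_sum => j; apply: ct_mul; last exact: ct_cst.
exact: ct_coord.
Qed.

Lemma ct_Fm (x : 'rV[R]_(k * 5)) : RL s x -> {for x, continuous (Fm hd)}.
Proof.
move=> rx; apply: ct_mx => i l.
rewrite (_ : (fun y => _) = fun y => Y y (unsidx hd l).1 (unsidx hd l).2 * (nY y)^-1); last first.
  by apply: funext => y; rewrite mxE.
apply: ct_mul; first exact: ct_Y.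
apply: ct_inv; first by rewrite gt_eqF // sqrtr_gt0 (SS_pos rx).
apply: ct_sqrt; apply: ct_sum => i'; apply: ct_sum => c.
by rewrite /GRing.exp /=; apply: ct_mul; apply: ct_Y.
Qed.

Lemma ct_Gm (z : 'rV[R]_(d.+1)) : SP z -> {for z, continuous (Gm hd s)}.
Proof.
move=> sz; apply: ct_mx => i u.
rewrite (_ : (fun y => _) = fun y => wf (s (unidx u).1) (unidx u).2
           (zc hd y (unidx u).1 false) (zc hd y (unidx u).1 true) * (Gz hd s y)^-1); last first.
  by apply: funext => y; rewrite mxE.
apply: ct_mul; first by apply: ct_wf; apply: ct_coord.
apply: ct_inv; first by rewrite gt_eqF // (@Gz_pos _ _ _ hd s z sz).
apply: ct_sum => i'; apply: ct_sum => j.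
by apply: ct_wf; apply: ct_coord.
Qed.

Lemma geom_main : homeomorphic (realization R (Kc s)) (sphere R d).
Proof.
exists (Fm hd), (Gm hd s); split; first split.
- move=> x rx; exact: (@Fm_sphere _ _ _ hd s x rx).
- by move=> z sz; apply: Gm_real.
- by move=> x rx; apply: Gm_Fm.
- by move=> z sz; apply: Fm_Gm.
split; apply: continuous_in_subspaceT => x; rewrite in_setE => h.
  exact: ct_Fm.
exact: ct_Gm.
Qed.

End GeoCT.

Lemma part1 (R : realType) (T : complex -> Prop) (Lam : complex -> R) (b : int -> R) :
  (forall K, T K -> Lam K = fsum b K) ->
  (exists c : int, c != 0 /\ forall K, T K -> euler K = c) ->
  comb_locally_determined T Lam.
Proof.
move=> HL [c [c0 Hc]].
exists (fun L => b (-1) / c%:~R * e0 R L + h0 b L); split.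
  by move=> L1 L2 _ _ e; rewrite (e0_inv R e) (h0_inv b e).
move=> K TK; rewrite HL // fsum_local big_split /= -big_distrr /= -euler_local Hc //.
by rewrite divfK // intr_eq0.
Qed.

Lemma part2 (R : realType) (T : complex -> Prop) (Lam : complex -> R) (b : int -> R) :
  (forall K, T K -> Lam K = fsum b K) -> b (-1) = 0 ->
  comb_locally_determined T Lam.
Proof.
move=> HL b0; exists (h0 b); split.
  by move=> L1 L2 _ _ e; rewrite (h0_inv b e).
by move=> K TK; rewrite HL // fsum_local b0 add0r.
Qed.

Lemma part3_local (R : realType) (T : complex -> Prop) (Lam : complex -> R) (b : int -> R)
  (h : complex -> R) K :
  (forall K, T K -> Lam K = fsum b K) ->
  (forall K, T K -> Lam K = \sum_(v in Vert K) h (link K v)) -> T K ->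
  b (-1) = \sum_(v in Vert K) (h (link K v) - h0 b (link K v)).
Proof.
move=> HL Hh TK; rewrite sumrB -Hh // HL // fsum_local.
by rewrite addrK.
Qed.


Lemma geom (R : realType) k d (hd : (k * 2 = d.+1)%N) (s : {ffun 'I_k -> bool}) :
  homeomorphic (realization R (Kc s)) (sphere R d).
Proof. exact: geom_main. Qed.

Lemma part3 (R : realType) (T : complex -> Prop) (Lam : complex -> R) (b : int -> R) :
  (forall K, T K -> Lam K = fsum b K) ->
  b (-1) != 0 ->
  (exists d : nat, odd d /\ (3 <= d)%N /\ forall K, flag_sphere R d K -> T K) ->
  ~ comb_locally_determined T Lam.
Proof.
move=> HL b0 [d [od [d3 HT]]] [h [hinv Hh]].
set k := (d.+1)./2.
have hd : (k * 2 = d.+1)%N.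
  by rewrite muln2 /k -[in RHS](odd_double_half d.+1) /= od.
have TK : forall s : {ffun 'I_k -> bool}, T (Kc s).
  move=> s; apply: HT; split; [exact: flagK | exact: geom hd s].
pose g := fun L => h L - h0 b L.
have ginv : forall (s s' : {ffun 'I_k -> bool}) i a a',
  (forall i0, i0 != i -> s i0 = s' i0) -> a \in verts (s i) -> a' \in verts (s' i) ->
  g (link (Kc s) (idx i a)) = g (link (Kc s') (idx i a')).
  move=> s s' i a a' ss' av av'; have e := link_equiv ss' av av'.
  rewrite /g (h0_inv b e); congr (_ - _); apply: hinv => //.
  - by exists (Kc s), (idx i a); split => //; rewrite vertK.
  - by exists (Kc s'), (idx i a'); split => //; rewrite vertK.
have := cancel_sum ginv.
under eq_bigr => s _ do rewrite -(part3_local HL Hh (TK s)).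
by rewrite -big_distrl /= sumW mul1r => /eqP; rewrite (negbTE b0).
Qed.

Theorem theorem1p2 (R : realType) (T : complex -> Prop) (Lam : complex -> R)
    (b : int -> R) :
  (forall K, T K -> Lam K = fsum b K) ->
  [/\ (exists c : int, c != 0 /\ forall K, T K -> euler K = c) ->
        comb_locally_determined T Lam,
      b (-1) = 0 -> comb_locally_determined T Lam &
      (b (-1) != 0 ->
       (exists d : nat, odd d /\ (3 <= d)%N /\
          forall K, flag_sphere R d K -> T K) ->
       ~ comb_locally_determined T Lam)].
Proof.
move=> HL; apply: And3; [exact: part1 HL | exact: part2 HL | exact: part3 HL].
Qed.
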